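(* Let $\mathbb{P}$ be a class of closed formulas, and let $P$ be a proof in $\mathbf{FBI}^{\mathbb{P}}$ of a safety problem $\Pi$. Then $\operatorname{Inv}^\rightleftharpoons(P)$ is a safe inductive invariant of $\Pi$, and if $P$ contains $n\in\mathbb{N}$ instances of the rule (Ind), then $\operatorname{Inv}^\rightleftharpoons(P)$ is a Boolean combination of $n$ predicates from $\mathbb{P}$.
   Context: A first-order vocabulary $\Sigma$ consists of constant, function and relation symbols; $\Sigma'=\{a' : a\in\Sigma\}$ is a disjoint copy, and for a formula $\varphi$ over $\Sigma$, $\varphi'$ denotes $\varphi$ with every symbol replaced by its primed copy. A safety problem is a triple $(\iota,\tau,\beta)$, where $\iota,\beta$ are closed formulas over $\Sigma$ and $\tau$ is a closed formula over $\Sigma\uplus\Sigma'$. $A\Rightarrow B$ means the implication $A\to B$ is valid. $\tau^{-1}$ denotes $\tau$ with each symbol of $\Sigma$ and its primed counterpart swapped. A closed formula $\varphi$ over $\Sigma$ is a safe inductive invariant of $(\iota,\tau,\beta)$ if $\iota\Rightarrow\varphi$, $\varphi\wedge\tau\Rightarrow\varphi'$ and $\varphi\Rightarrow\neg\beta$. Proofs: a proof of $\Pi$ in a system is a finite tree whose nodes are safety problems, whose root is $\Pi$, and in which each node together with its children is an instance of one of the system's rules, with side conditions valid. $\mathbf{FBI}$ has the rules ($\varphi$ ranges over closed formulas over $\Sigma$): (Ind): no premises; conclusion $(\iota,\tau,\neg\varphi)$; side conditions $\iota\Rightarrow\varphi$ and $\varphi\wedge\tau\Rightarrow\varphi'$.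 (Cons): premise $(\iota,\tau,\neg\varphi)$; conclusion $(\iota,\tau,\beta)$; side condition $\varphi\Rightarrow\neg\beta$. (Inc): premises $(\iota,\tau,\neg\varphi)$ and $(\iota\wedge\varphi,\ \tau\wedge\varphi\wedge\varphi',\ \beta\wedge\varphi)$; conclusion $(\iota,\tau,\beta)$. (Rev): premise $(\beta,\tau^{-1},\iota)$; conclusion $(\iota,\tau,\beta)$. $\mathbf{FBI}^{\mathbb{P}}$ is $\mathbf{FBI}$ with applications of (Ind) restricted to $\varphi\in\mathbb{P}$. $\operatorname{Inv}^\rightleftharpoons(P)$ is defined by induction on $P$: if the root is the conclusion $(\iota,\tau,\neg\varphi)$ of (Ind), it is $\varphi$; if the root is the conclusion of (Cons) with premise proof $\tilde P$, it is $\operatorname{Inv}^\rightleftharpoons(\tilde P)$; if the root is the conclusion of (Inc) with premise proofs $P_1,P_2$, it is $\operatorname{Inv}^\rightleftharpoons(P_1)\wedge\operatorname{Inv}^\rightleftharpoons(P_2)$; if the root is the conclusion of (Rev) with premise proof $\tilde P$, it is $\neg\operatorname{Inv}^\rightleftharpoons(\tilde P)$. *)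

(* Defs.v *)
From Stdlib Require Import List.
Import ListNotations.
Set Implicit Arguments.

(* Function symbols (constants = 0-ary function symbols) and relation symbols,
   each with an arity. *)
Record vocab := {
  fsym : Type;
  rsym : Type;
  farity : fsym -> nat;
  rarity : rsym -> nat
}.

(* Sigma ⊎ Sigma' : inl = unprimed symbol a, inr = primed copy a'. *)
Definition dup (S : vocab) : vocab := {|
  fsym := (fsym S + fsym S)%type;
  rsym := (rsym S + rsym S)%type;
  farity := fun f => match f with inl g => farity S g | inr g => farity S g end;
  rarity := fun r => match r with inl g => rarity S g | inr g => rarity S g end
|}.

Inductive term (F : Type) : Type :=
| Var : nat -> term F
| App : F -> list (term F) -> term F.
Arguments Var {F} _.

Inductive form (F R : Type) : Type :=
| FTrue : form F R
| FFalse : form F R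
| FEq : term F -> term F -> form F R
| FRel : R -> list (term F) -> form F R
| FNot : form F R -> form F R
| FAnd : form F R -> form F R -> form F R
| FOr : form F R -> form F R -> form F R
| FImp : form F R -> form F R -> form F R
| FAll : nat -> form F R -> form F R
| FEx : nat -> form F R -> form F R.
Arguments FTrue {F R}.
Arguments FFalse {F R}.
Arguments FEq {F R} _ _.
Arguments FRel {F R} _ _.
Arguments FNot {F R} _.
Arguments FAnd {F R} _ _.
Arguments FOr {F R} _ _.
Arguments FImp {F R} _ _.
Arguments FAll {F R} _ _.
Arguments FEx {F R} _ _.
Arguments App {F} _ _.

Definition fm (S : vocab) := form (fsym S) (rsym S).

Fixpoint twf (S : vocab) (t : term (fsym S)) : Prop :=
  match t with
  | Var _ => True
  | App f ts => length ts = farity S f /\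
      (fix go (l : list (term (fsym S))) : Prop :=
         match l with nil => True | t :: l => @twf S t /\ go l end) ts
  end.

Fixpoint twf_list (S : vocab) (l : list (term (fsym S))) : Prop :=
  match l with nil => True | t :: l => @twf S t /\ @twf_list S l end.

Fixpoint fwf (S : vocab) (phi : fm S) : Prop :=
  match phi with
  | FTrue | FFalse => True
  | FEq t1 t2 => @twf S t1 /\ @twf S t2
  | FRel r ts => length ts = rarity S r /\ @twf_list S ts
  | FNot a => @fwf S a
  | FAnd a b | FOr a b | FImp a b => @fwf S a /\ @fwf S b
  | FAll _ a | FEx _ a => @fwf S a
  end.

Fixpoint tfree (F : Type) (n : nat) (t : term F) : Prop :=
  match t with
  | Var m => n = m
  | App _ ts =>
      (fix go (l : list (term F)) : Prop :=
         match l with nil => False | t :: l => tfree n t \/ go l end) ts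
  end.

Fixpoint tfree_list (F : Type) (n : nat) (l : list (term F)) : Prop :=
  match l with nil => False | t :: l => tfree n t \/ tfree_list n l end.

Fixpoint ffree (F R : Type) (n : nat) (phi : form F R) : Prop :=
  match phi with
  | FTrue | FFalse => False
  | FEq t1 t2 => tfree n t1 \/ tfree n t2
  | FRel _ ts => tfree_list n ts
  | FNot a => ffree n a
  | FAnd a b | FOr a b | FImp a b => ffree n a \/ ffree n b
  | FAll m a | FEx m a => n <> m /\ ffree n a
  end.

Definition closed_over (S : vocab) (phi : fm S) : Prop :=
  @fwf S phi /\ forall n, ~ ffree n phi.
Arguments closed_over S phi : clear implicits.

Record structure (S : vocab) := {
  dom : Type;
  dom_inh : dom;
  fint : fsym S -> list dom -> dom;
  rint : rsym S -> list dom -> Prop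
}.

Fixpoint teval (S : vocab) (M : structure S) (env : nat -> dom M)
  (t : term (fsym S)) : dom M :=
  match t with
  | Var n => env n
  | App f ts => fint M f (map (teval M env) ts)
  end.

Definition upd (D : Type) (env : nat -> D) (n : nat) (d : D) : nat -> D :=
  fun m => if Nat.eqb m n then d else env m.

Fixpoint sat (S : vocab) (M : structure S) (env : nat -> dom M) (phi : fm S)
  : Prop :=
  match phi with
  | FTrue => True
  | FFalse => False
  | FEq t1 t2 => teval M env t1 = teval M env t2
  | FRel r ts => rint M r (map (teval M env) ts)
  | FNot a => ~ sat M env a
  | FAnd a b => sat M env a /\ sat M env b
  | FOr a b => sat M env a \/ sat M env b
  | FImp a b => sat M env a -> sat M env b
  | FAll n a => forall d : dom M, sat M (upd env n d) a
  | FEx n a => exists d : dom M, sat M (upd env n d) a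
  end.

Definition valid (S : vocab) (phi : fm S) : Prop :=
  forall (M : structure S) (env : nat -> dom M), sat M env phi.
Arguments valid S phi : clear implicits.

Definition entails (S : vocab) (A B : fm S) : Prop := valid S (FImp A B).
Arguments entails S A B : clear implicits.

Fixpoint trename (F F' : Type) (g : F -> F') (t : term F) : term F' :=
  match t with
  | Var n => Var n
  | App f ts => App (g f) (map (trename g) ts)
  end.

Fixpoint frename (F F' R R' : Type) (g : F -> F') (h : R -> R')
  (phi : form F R) : form F' R' :=
  match phi with
  | FTrue => FTrue
  | FFalse => FFalse
  | FEq t1 t2 => FEq (trename g t1) (trename g t2)
  | FRel r ts => FRel (h r) (map (trename g) ts)
  | FNot a => FNot (frename g h a)
  | FAnd a b => FAnd (frename g h a) (frename g h b)
  | FOr a b => FOr (frename g h a) (frename g h b)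
  | FImp a b => FImp (frename g h a) (frename g h b)
  | FAll n a => FAll n (frename g h a)
  | FEx n a => FEx n (frename g h a)
  end.

Definition swap_sum (A : Type) (x : A + A) : A + A :=
  match x with inl a => inr a | inr a => inl a end.

Definition unprimed (S : vocab) (phi : fm S) : fm (dup S) :=
  frename (@inl (fsym S) (fsym S)) (@inl (rsym S) (rsym S)) phi.
Definition primed (S : vocab) (phi : fm S) : fm (dup S) :=
  frename (@inr (fsym S) (fsym S)) (@inr (rsym S) (rsym S)) phi.
Definition tinv (S : vocab) (tau : fm (dup S)) : fm (dup S) :=
  frename (@swap_sum (fsym S)) (@swap_sum (rsym S)) tau.

Record problem (S : vocab) := mkProblem {
  p_init : fm S;
  p_trans : fm (dup S);
  p_bad : fm S
}.
Arguments mkProblem {S} _ _ _.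

Definition safety_problem (S : vocab) (Pi : problem S) : Prop :=
  closed_over S (p_init Pi) /\ closed_over (dup S) (p_trans Pi) /\
  closed_over S (p_bad Pi).
Arguments safety_problem S Pi : clear implicits.

Definition safe_inductive_invariant (S : vocab) (Pi : problem S) (phi : fm S)
  : Prop :=
  closed_over S phi /\
  entails S (p_init Pi) phi /\
  entails (dup S) (FAnd (unprimed phi) (p_trans Pi)) (primed phi) /\
  entails S phi (FNot (p_bad Pi)).
Arguments safe_inductive_invariant S Pi phi : clear implicits.

Inductive fbi (S : vocab) (PP : fm S -> Prop) : problem S -> Type :=
| RInd (iota : fm S) (tau : fm (dup S)) (phi : fm S) :
    closed_over S phi -> PP phi ->
    entails S iota phi ->
    entails (dup S) (FAnd (unprimed phi) tau) (primed phi) ->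
    fbi PP (mkProblem iota tau (FNot phi))
| RCons (iota : fm S) (tau : fm (dup S)) (beta phi : fm S) :
    closed_over S phi ->
    entails S phi (FNot beta) ->
    fbi PP (mkProblem iota tau (FNot phi)) ->
    fbi PP (mkProblem iota tau beta)
| RInc (iota : fm S) (tau : fm (dup S)) (beta phi : fm S) :
    closed_over S phi ->
    fbi PP (mkProblem iota tau (FNot phi)) ->
    fbi PP (mkProblem (FAnd iota phi)
                      (FAnd tau (FAnd (unprimed phi) (primed phi)))
                      (FAnd beta phi)) ->
    fbi PP (mkProblem iota tau beta)
| RRev (iota : fm S) (tau : fm (dup S)) (beta : fm S) :
    fbi PP (mkProblem beta (tinv tau) iota) ->
    fbi PP (mkProblem iota tau beta).

Fixpoint Inv (S : vocab) (PP : fm S -> Prop) (Pi : problem S)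
  (P : fbi PP Pi) {struct P} : fm S :=
  match P with
  | @RInd _ _ _ _ phi _ _ _ _ => phi
  | @RCons _ _ _ _ _ _ _ _ P1 => Inv P1
  | @RInc _ _ _ _ _ _ _ P1 P2 => FAnd (Inv P1) (Inv P2)
  | @RRev _ _ _ _ _ P1 => FNot (Inv P1)
  end.

Fixpoint count_ind (S : vocab) (PP : fm S -> Prop) (Pi : problem S)
  (P : fbi PP Pi) {struct P} : nat :=
  match P with
  | @RInd _ _ _ _ _ _ _ _ _ => 1
  | @RCons _ _ _ _ _ _ _ _ P1 => count_ind P1
  | @RInc _ _ _ _ _ _ _ P1 P2 => count_ind P1 + count_ind P2
  | @RRev _ _ _ _ _ P1 => count_ind P1
  end.

Inductive boolcomb (F R : Type) (ps : list (form F R)) : form F R -> Prop :=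
| bc_atom psi : In psi ps -> boolcomb ps psi
| bc_true : boolcomb ps FTrue
| bc_false : boolcomb ps FFalse
| bc_not a : boolcomb ps a -> boolcomb ps (FNot a)
| bc_and a b : boolcomb ps a -> boolcomb ps b -> boolcomb ps (FAnd a b)
| bc_or a b : boolcomb ps a -> boolcomb ps b -> boolcomb ps (FOr a b)
| bc_imp a b : boolcomb ps a -> boolcomb ps b -> boolcomb ps (FImp a b).

(* Main.v *)
Require Import Defs.
From Stdlib Require Import List Classical.
Import ListNotations.

Definition pull (S1 S2 : vocab) (g : fsym S1 -> fsym S2) (h : rsym S1 -> rsym S2)
  (M : structure S2) : structure S1 :=
  {| dom := dom M; dom_inh := dom_inh M;
     fint := fun f l => fint M (g f) l; rint := fun r l => rint M (h r) l |}.
Arguments pull {S1 S2} g h M.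

Section Pull.
Variables (S1 S2 : vocab) (g : fsym S1 -> fsym S2) (h : rsym S1 -> rsym S2)
  (M : structure S2).

Fixpoint teval_pull (env : nat -> dom M) (t : term (fsym S1)) :
  teval (pull g h M) env t = teval M env (trename g t) :=
  match t with
  | Var n => eq_refl
  | App f ts => f_equal (fint M (g f))
      ((fix go (l : list (term (fsym S1))) :
          map (teval (pull g h M) env) l = map (teval M env) (map (trename g) l) :=
          match l with
          | nil => eq_refl
          | t :: l => f_equal2 (@cons _) (teval_pull env t) (go l)
          end) ts)
  end.

Lemma map_teval_pull env ts :
  map (teval (pull g h M) env) ts = map (teval M env) (map (trename g) ts).
Proof. induction ts; simpl; [reflexivity|]. f_equal; [apply teval_pull | exact IHts]. Qed.

Lemma sat_pull (phi : fm S1) : forall env : nat -> dom M,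
  sat (pull g h M) env phi <-> sat M env (frename g h phi).
Proof.
  induction phi; intro env; simpl; try tauto.
  - rewrite !teval_pull; tauto.
  - rewrite map_teval_pull; tauto.
  - rewrite IHphi; tauto.
  - rewrite IHphi1, IHphi2; tauto.
  - rewrite IHphi1, IHphi2; tauto.
  - rewrite IHphi1, IHphi2; tauto.
  - split; intros H d; apply IHphi, H.
  - split; intros [d H]; exists d; apply IHphi, H.
Qed.
End Pull.

Fixpoint trename_inv (F : Type) (g : F -> F) (Hg : forall x, g (g x) = x) (t : term F) :
  trename g (trename g t) = t :=
  match t with
  | Var n => eq_refl
  | App f ts => f_equal2 (@App F) (Hg f)
      ((fix go (l : list (term F)) : map (trename g) (map (trename g) l) = l :=
          match l with
          | nil => eq_refl
          | t :: l => f_equal2 (@cons _) (trename_inv F g Hg t) (go l)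
          end) ts)
  end.

Lemma map_trename_inv (F : Type) (g : F -> F) (Hg : forall x, g (g x) = x) ts :
  map (trename g) (map (trename g) ts) = ts.
Proof. induction ts; simpl; [reflexivity|]. rewrite trename_inv, IHts; auto. Qed.

Lemma frename_inv (F R : Type) (g : F -> F) (h : R -> R)
  (Hg : forall x, g (g x) = x) (Hh : forall x, h (h x) = x) (phi : form F R) :
  frename g h (frename g h phi) = phi.
Proof.
  induction phi; simpl; try congruence.
  - rewrite !trename_inv; auto.
  - rewrite Hh, map_trename_inv; auto.
Qed.

Lemma swap_inv (A : Type) (x : A + A) : swap_sum (swap_sum x) = x.
Proof. destruct x; reflexivity. Qed.

Lemma tinv_inv S (tau : fm (dup S)) : tinv (tinv tau) = tau.
Proof. unfold tinv. apply frename_inv; apply swap_inv. Qed.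

Section Main.
Variable S : vocab.

Definition pl (M : structure (dup S)) : structure S :=
  pull (S1:=S) (S2:=dup S) inl inl M.
Definition pr (M : structure (dup S)) : structure S :=
  pull (S1:=S) (S2:=dup S) inr inr M.

Lemma sat_un M env (phi : fm S) : sat M env (unprimed phi) <-> sat (pl M) env phi.
Proof. unfold pl, unprimed. rewrite sat_pull. tauto. Qed.
Lemma sat_pr M env (phi : fm S) : sat M env (primed phi) <-> sat (pr M) env phi.
Proof. unfold pr, primed. rewrite sat_pull. tauto. Qed.

Lemma closed_and (a b : fm S) : closed_over S a -> closed_over S b ->
  closed_over S (FAnd a b).
Proof. intros [Ha Ha'] [Hb Hb']. split; simpl; [tauto|]. intros n [H|H]; [eapply Ha' | eapply Hb']; eauto. Qed.
Lemma closed_not (a : fm S) : closed_over S a -> closed_over S (FNot a).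
Proof. intros [Ha Ha']. split; simpl; auto. Qed.

Lemma incl_bc (ps qs : list (fm S)) a : incl ps qs -> boolcomb ps a -> boolcomb qs a.
Proof. intros Hi H; induction H; [apply bc_atom; auto|apply bc_true|apply bc_false|apply bc_not|apply bc_and|apply bc_or|apply bc_imp]; auto. Qed.

Lemma main (PP : fm S -> Prop) (Pi : problem S) (P : fbi PP Pi) :
  safe_inductive_invariant S Pi (Inv P) /\
  exists ps : list (fm S),
    length ps = count_ind P /\ Forall PP ps /\ boolcomb ps (Inv P).
Proof.
  induction P; simpl.
  - split.
    + split; [auto|]. split; [auto|]. split; [auto|].
      intros M env H H'. simpl in *. auto.
    + exists [phi]. split; [reflexivity|]. split; [constructor; auto|].
      constructor; simpl; auto.
  - destruct IHP as [[Hc [Hi [Ht Hb]]] [ps [Hl [Hf Hbc]]]]. simpl in *.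
    split.
    + split; [auto|]. split; [auto|]. split; [auto|].
      intros M env H Hbeta. simpl in *. apply (Hb M env H).
      intro Hphi. exact (e M env Hphi Hbeta).
    + exists ps; auto.
  - destruct IHP1 as [[Hc1 [Hi1 [Ht1 Hb1]]] [ps1 [Hl1 [Hf1 Hbc1]]]].
    destruct IHP2 as [[Hc2 [Hi2 [Ht2 Hb2]]] [ps2 [Hl2 [Hf2 Hbc2]]]]. simpl in *.
    assert (K : forall M env, sat M env (Inv P1) -> sat M env phi).
    { intros M env H. apply NNPP. exact (Hb1 M env H). }
    split.
    + split; [apply closed_and; auto|]. split; [|split].
      * intros M env H. simpl. split; [apply Hi1; auto|].
        apply Hi2. simpl. split; auto. apply K, Hi1; auto.
      * intros M env [[H1 H2] Ht]. simpl in *.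
        assert (H1' : sat M env (primed (Inv P1))) by (apply Ht1; simpl; auto).
        split; auto. apply Ht2. simpl. split; [auto|]. split; [auto|]. split.
        -- apply sat_un. apply K. apply sat_un; auto.
        -- apply sat_pr. apply K. apply sat_pr; auto.
      * intros M env [H1 H2] Hbeta. simpl in *. apply (Hb2 M env H2). split; [exact Hbeta | apply K; exact H1].
    + exists (ps1 ++ ps2). split; [rewrite length_app; auto|].
      split; [apply Forall_app; auto|].
      apply bc_and; eapply incl_bc; eauto; intros x Hx; apply in_or_app; auto.
  - destruct IHP as [[Hc [Hi [Ht Hb]]] [ps [Hl [Hf Hbc]]]]. simpl in *.
    split.
    + split; [apply closed_not; auto|]. split; [|split].
      * intros M env H H'. exact (Hb M env H' H).
      * intros M env [H1 H2]. simpl in *. intro H3.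
        set (M' := pull (S1:=dup S) (S2:=dup S) (@swap_sum _) (@swap_sum _) M).
        assert (A1 : sat M' env (unprimed (Inv P))).
        { apply sat_un. apply sat_pr in H3. exact H3. }
        assert (A2 : sat M' env (tinv tau)).
        { unfold M'. apply sat_pull. change (sat M env (tinv (tinv tau))).
          rewrite tinv_inv. exact H2. }
        assert (A3 := Ht M' env (conj A1 A2)).
        apply sat_pr in A3. apply H1. apply sat_un. exact A3.
      * intros M env H H'. simpl in H. apply H. apply Hi. exact H'.
    + exists ps. split; auto. split; auto. apply bc_not; auto.
Qed.
End Main.

Theorem theorem4p13 (S : vocab) (PP : fm S -> Prop)
  (HPP : forall phi, PP phi -> closed_over S phi)
  (Pi : problem S) (HPi : safety_problem S Pi) (P : fbi PP Pi) :
  safe_inductive_invariant S Pi (Inv P) /\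
  exists ps : list (fm S),
    length ps = count_ind P /\ Forall PP ps /\ boolcomb ps (Inv P).
Proof. apply main. Qed.
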